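(* Let $\mathbf m=(m_1,\ldots,m_p)\in\mathbb N^p$, $n\in\mathbb N$ and $|x|<1$. Then \[ 2n\int_0^x t^{2n-1}dt\,\frac{dt}{1-t^2}\Big(\frac{dt}{t}\Big)^{m_1-1}\frac{t\,dt}{1-t^2}\Big(\frac{dt}{t}\Big)^{m_2-1}\cdots\frac{t\,dt}{1-t^2}\Big(\frac{dt}{t}\Big)^{m_p-1} =(2n-1)\int_0^x t^{2n-2}dt\,\frac{t\,dt}{1-t^2}\Big(\frac{dt}{t}\Big)^{m_1-1}\frac{t\,dt}{1-t^2}\Big(\frac{dt}{t}\Big)^{m_2-1}\cdots\frac{t\,dt}{1-t^2}\Big(\frac{dt}{t}\Big)^{m_p-1} \] \[ =\sum_{j=1}^p(-1)^{j-1}t^\star_n(m_1,\ldots,m_{j-1})\,\mathrm{ti}_{m_p,\ldots,m_j}(x)+(-1)^p t^\star_n(\mathbf m;x). \]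
   Context: Iterated integrals: $\int_a^b f_q(t)dt\cdots f_1(t)dt:=\int_{a<t_q<\cdots<t_1<b}f_q(t_q)\cdots f_1(t_1)\,dt_1\cdots dt_q$, along the straight segment. For a composition $\mathbf k=(k_1,\ldots,k_r)$: $t^\star_n(\mathbf k)=\sum_{n\ge n_1\ge\cdots\ge n_r\ge1}\prod_i(2n_i-1)^{-k_i}$ (with $t^\star_n(\emptyset)=1$), $t^\star_n(\mathbf k;x)=\sum_{n\ge n_1\ge\cdots\ge n_r\ge1}x^{2n_r-1}\prod_i(2n_i-1)^{-k_i}$, and the multiple $t$-polylogarithm $\mathrm{ti}_{\mathbf k}(x)=\sum_{n_1>\cdots>n_r>0}x^{2n_1-1}\prod_i(2n_i-1)^{-k_i}$. *)

(* Defs.v *)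
From Stdlib Require Import Reals Lra Lia List.
From Coquelicot Require Import Coquelicot.
Import ListNotations.
Open Scope R_scope.

(* Iterated integral along the straight segment from 0 to x.
   [itint_aux [f_1; ...; f_q] x] = int_0^x f_1(t1) (int_0^t1 f_2(t2) (... ) dt2) dt1,
   i.e. the head of the list is the OUTERMOST form (closest to x). *)
Fixpoint itint_aux (fs : list (R -> R)) (x : R) : R :=
  match fs with
  | nil => 1
  | f :: fs' => RInt (fun t => f t * itint_aux fs' t) 0 x
  end.

(* Paper's notation: int_0^x f_q(t)dt ... f_1(t)dt, written left to right as the
   word [f_q; ...; f_1]; leftmost form is innermost (t_q closest to 0). *)
Definition itint (w : list (R -> R)) (x : R) : R := itint_aux (rev w) x.

Definition om_t (t : R) : R := / t.
Definition om_1 (t : R) : R := / (1 - t ^ 2).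
Definition om_tt (t : R) : R := t / (1 - t ^ 2).

Definition block (m : nat) : list (R -> R) := om_tt :: repeat om_t (m - 1).

Definition oddinv (j k : nat) : R := / (INR (2 * j - 1)) ^ k.

(* t^star_n(k_1,...,k_r) = sum_{n >= n_1 >= ... >= n_r >= 1} prod (2n_i-1)^{-k_i} *)
Fixpoint tstar (n : nat) (ks : list nat) : R :=
  match ks with
  | nil => 1
  | k :: ks' => sum_n_m (fun j => oddinv j k * tstar j ks') 1 n
  end.

(* t^star_n(k_1,...,k_r; x) = sum_{n>=n_1>=...>=n_r>=1} x^{2n_r-1} prod (2n_i-1)^{-k_i}
   (only used for r >= 1; the value for the empty list is irrelevant) *)
Fixpoint tstarx (n : nat) (ks : list nat) (x : R) : R :=
  match ks with
  | nil => 1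
  | k :: ks' =>
      sum_n_m (fun j => oddinv j k *
                        match ks' with
                        | nil => x ^ (2 * j - 1)
                        | _ => tstarx j ks' x
                        end) 1 n
  end.

(* strict finite sums t_M(k_1,...,k_r) = sum_{M >= n_1 > ... > n_r >= 1} prod (2n_i-1)^{-k_i} *)
Fixpoint tstrict (M : nat) (ks : list nat) : R :=
  match ks with
  | nil => 1
  | k :: ks' => sum_n_m (fun j => oddinv j k * tstrict (j - 1) ks') 1 M
  end.

(* multiple t-polylogarithm
   ti_{k_1,...,k_r}(x) = sum_{n_1 > ... > n_r > 0} x^{2n_1-1} prod (2n_i-1)^{-k_i} *)
Definition ti (ks : list nat) (x : R) : R :=
  match ks with
  | nil => 1
  | k :: ks' =>
      Series (fun N => match N with
                       | O => 0
                       | S _ => x ^ (2 * N - 1) * oddinv N k * tstrict (N - 1) ks'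
                       end)
  end.

(* Main.v *)
Require Import Defs.
From Stdlib Require Import Reals List.
From Coquelicot Require Import Coquelicot.
From Stdlib Require Import Lra Lia Arith.
Import ListNotations.
Open Scope R_scope.

Lemma INR_odd N : (1 <= N)%nat -> INR (2 * N - 1) = 2 * INR N - 1.
Proof. intros H. rewrite minus_INR by lia. rewrite mult_INR. simpl. lra. Qed.

Lemma INR_odd_ge1 N : (1 <= N)%nat -> 1 <= INR (2 * N - 1).
Proof. intros H. rewrite INR_odd by exact H. apply le_INR in H. simpl in H. lra. Qed.

Lemma oddinv_le1 j k : Rabs (oddinv j k) <= 1.
Proof.
  unfold oddinv. destruct j as [|j].
  - simpl. destruct k as [|k]; simpl.
    + rewrite Rinv_1, Rabs_R1. lra.
    + rewrite Rmult_0_l, Rinv_0, Rabs_R0. lra.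
  - assert (H := INR_odd_ge1 (S j) ltac:(lia)).
    assert (Hp : 1 <= INR (2 * S j - 1) ^ k) by (apply pow_R1_Rle; exact H).
    rewrite Rabs_pos_eq.
    + rewrite <- Rinv_1. apply Rinv_le_contravar; lra.
    + left. apply Rinv_0_lt_compat. lra.
Qed.

Lemma oddinv1_mul N : (1 <= N)%nat -> INR (2 * N - 1) * oddinv N 1 = 1.
Proof.
  intros H. unfold oddinv. rewrite pow_1. apply Rinv_r.
  assert (H1 := INR_odd_ge1 N H). lra.
Qed.

Lemma oddinv_pow N m : (1 <= m)%nat -> oddinv N 1 ^ (m - 1) * oddinv N 1 = oddinv N m.
Proof.
  intros H. destruct m as [|m]; [lia|]. replace (S m - 1)%nat with m by lia.
  unfold oddinv. rewrite pow_1. rewrite pow_inv, <- Rinv_mult. simpl. f_equal. ring.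
Qed.

Lemma pow_le1 s k : 0 <= s <= 1 -> s ^ k <= 1.
Proof. intros Hs. induction k; simpl. lra. assert (0 <= s ^ k) by (apply pow_le; lra). nra. Qed.

Definition good (c : nat -> R) :=
  forall r, 0 < r < 1 -> exists M, forall N, Rabs (c N) * r ^ N <= M.

Lemma good_ext1 c d : (forall N, (1 <= N)%nat -> c N = d N) -> good c -> good d.
Proof.
  intros E G r Hr. destruct (G r Hr) as [M HM].
  exists (Rmax M (Rabs (d 0%nat))). intros [|N].
  - simpl. rewrite Rmult_1_r. apply Rmax_r.
  - rewrite <- E by lia. eapply Rle_trans; [apply HM|apply Rmax_l].
Qed.

Lemma good_plus c d : good c -> good d -> good (fun N => c N + d N).
Proof.
  intros Gc Gd r Hr. destruct (Gc r Hr) as [M1 H1]. destruct (Gd r Hr) as [M2 H2].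
  exists (M1 + M2). intros N. specialize (H1 N). specialize (H2 N).
  assert (0 <= r ^ N) by (apply pow_le; lra).
  eapply Rle_trans. apply Rmult_le_compat_r. exact H. apply Rabs_triang. lra.
Qed.

Lemma good_mulb e c : (forall N, Rabs (e N) <= 1) -> good c -> good (fun N => e N * c N).
Proof.
  intros He Gc r Hr. destruct (Gc r Hr) as [M H1]. exists M. intros N.
  specialize (H1 N). specialize (He N).
  assert (0 <= r ^ N) by (apply pow_le; lra).
  rewrite Rabs_mult. assert (0 <= Rabs (c N)) by apply Rabs_pos.
  assert (Rabs (e N) * Rabs (c N) <= Rabs (c N)).
  { pose proof (Rabs_pos (e N)). nra. }
  eapply Rle_trans; [|exact H1]. apply Rmult_le_compat_r; auto.
Qed.

Lemma good_scal a c : good c -> good (fun N => a * c N).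
Proof.
  intros Gc r Hr. destruct (Gc r Hr) as [M H1]. exists (Rabs a * M). intros N.
  rewrite Rabs_mult, Rmult_assoc. apply Rmult_le_compat_l. apply Rabs_pos. apply H1.
Qed.

Lemma good_zero : good (fun _ => 0).
Proof. intros r Hr. exists 0. intros N. rewrite Rabs_R0. lra. Qed.

Lemma good_bounded c : (forall N, Rabs (c N) <= 1) -> good c.
Proof.
  intros Hc r Hr. exists 1. intros N. specialize (Hc N).
  assert (0 <= r ^ N) by (apply pow_le; lra).
  assert (r ^ N <= 1) by (apply pow_le1; lra).
  pose proof (Rabs_pos (c N)). nra.
Qed.

Lemma good_sum (f : nat -> nat -> R) a b :
  (forall j, good (f j)) -> good (fun N => sum_n_m (fun j => f j N) a b).
Proof.
  intros Gf. induction b as [|b IH].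
  - destruct a as [|a].
    + eapply good_ext1; [|apply (Gf 0%nat)]. intros N _. rewrite sum_n_n. reflexivity.
    + eapply good_ext1; [|apply good_zero]. intros N _. rewrite sum_n_m_zero by lia. reflexivity.
  - destruct (le_lt_dec a (S b)) as [Hab|Hab].
    + eapply good_ext1; [|apply (good_plus _ _ IH (Gf (S b)))].
      intros N _. rewrite sum_n_Sm by exact Hab. reflexivity.
    + eapply good_ext1; [|apply good_zero]. intros N _. rewrite sum_n_m_zero by lia. reflexivity.
Qed.

Lemma Nbound q : 0 < q < 1 -> exists K, forall N, INR N * q ^ N <= K.
Proof.
  intros Hq. set (h := / q - 1).
  assert (Hh : 0 < h). { unfold h. assert (1 < / q). { rewrite <- Rinv_1. apply Rinv_lt_contravar; lra. } lra. }
  assert (Bern : forall N, 1 + INR N * h <= (/ q) ^ N).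
  { induction N as [|N IH]. simpl. lra.
    rewrite S_INR. simpl. replace (/ q) with (1 + h) by (unfold h; ring).
    replace (/ q) with (1 + h) in IH by (unfold h; ring).
    pose proof (pos_INR N). nra. }
  exists (/ h). intros N. specialize (Bern N).
  rewrite pow_inv in Bern.
  assert (Hp : 0 < q ^ N) by (apply pow_lt; lra).
  assert (INR N * h * q ^ N <= 1).
  { assert (INR N * h <= / q ^ N) by lra.
    apply Rmult_le_compat_r with (r := q ^ N) in H; [|lra].
    rewrite Rinv_l in H; lra. }
  apply (Rmult_le_reg_r h); [lra|]. rewrite Rinv_l by lra. nra.
Qed.


Lemma sum_n_m_le_loc (a b : nat -> R) n m :
  (forall k, (n <= k <= m)%nat -> a k <= b k) -> sum_n_m a n m <= sum_n_m b n m.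
Proof.
  intros H. rewrite (sum_n_m_ext_loc a (fun k => Rmin (a k) (b k))).
  - apply sum_n_m_le. intros k. apply Rmin_r.
  - intros k Hk. rewrite Rmin_left; auto.
Qed.

Definition psum (c : nat -> R) (N : nat) : R := sum_n_m c 1 (N - 1).

Lemma pow_le_mono_small s k N : 0 <= s <= 1 -> (k <= N)%nat -> s ^ N <= s ^ k.
Proof.
  intros Hs H. replace N with (k + (N - k))%nat by lia. rewrite pow_add.
  assert (0 <= s ^ k) by (apply pow_le; lra).
  assert (s ^ (N - k) <= 1) by (apply pow_le1; lra).
  assert (0 <= s ^ (N-k)) by (apply pow_le; lra). nra.
Qed.

Lemma good_psum c : good c -> good (psum c).
Proof.
  intros Gc r Hr. set (s := sqrt r).
  assert (Hs : 0 < s < 1).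
  { unfold s. split. apply sqrt_lt_R0; lra. rewrite <- sqrt_1. apply sqrt_lt_1; lra. }
  assert (Hss : s * s = r) by (unfold s; apply sqrt_sqrt; lra).
  destruct (Gc s Hs) as [M HM]. destruct (Nbound s Hs) as [K HK].
  assert (HM0 : 0 <= M). { specialize (HM 0%nat). simpl in HM. pose proof (Rabs_pos (c 0%nat)). lra. }
  exists (M * K). intros N. unfold psum.
  assert (Hp : 0 <= r ^ N) by (apply pow_le; lra).
  assert (Hsp : 0 <= s ^ N) by (apply pow_le; lra).
  apply Rle_trans with (sum_n_m (fun k => Rabs (c k)) 1 (N - 1) * r ^ N).
  { apply Rmult_le_compat_r. exact Hp. apply (norm_sum_n_m c 1 (N-1)). }
  rewrite <- (sum_n_m_mult_r (K := R_Ring)).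
  apply Rle_trans with (sum_n_m (fun _ => M * s ^ N) 1 (N - 1)).
  { apply sum_n_m_le_loc. intros k Hk.
    replace (r ^ N) with (s ^ N * s ^ N) by (rewrite <- Hss; rewrite Rpow_mult_distr; reflexivity). 
    change (Rabs (c k) * (s ^ N * s ^ N) <= M * s ^ N).
    specialize (HM k).
    assert (s ^ N <= s ^ k) by (apply pow_le_mono_small; lra || lia).
    pose proof (Rabs_pos (c k)). assert (0 <= s ^ k) by (apply pow_le; lra).
    apply Rle_trans with (Rabs (c k) * s ^ k * s ^ N).
    { rewrite Rmult_assoc. apply Rmult_le_compat_l. lra. apply Rmult_le_compat_r; lra. }
    apply Rmult_le_compat_r; lra. }
  rewrite sum_n_m_const.
  specialize (HK N).
  apply Rle_trans with (INR N * (M * s ^ N)).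
  { apply Rmult_le_compat_r. nra. apply le_INR. lia. }
  nra.
Qed.

Lemma rad_good a y : good a -> Rabs y < 1 -> Rbar_lt (Rabs y) (CV_radius a).
Proof.
  intros Ga Hy. set (r := (Rabs y + 1) / 2).
  assert (Hr : 0 < r < 1) by (pose proof (Rabs_pos y); unfold r; lra).
  destruct (Ga r Hr) as [M HM].
  destruct (CV_radius_bounded a) as [Hub _].
  assert (Hle : Rbar_le r (CV_radius a)).
  { apply Hub. exists M. intros n. rewrite Rabs_mult, (Rabs_pos_eq (r ^ n)). apply HM.
    apply pow_le; lra. }
  destruct (CV_radius a); simpl in *; auto. unfold r in Hle. lra.
Qed.

Definition sh (c : nat -> R) (k : nat) : R := c (S k).

Lemma good_sh c : good c -> good (sh c).
Proof.
  intros Gc r Hr. destruct (Gc r Hr) as [M HM]. exists (M / r). intros k.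
  unfold sh. specialize (HM (S k)). simpl in HM.
  apply (Rmult_le_reg_r r); [lra|]. replace (M / r * r) with M by (field; lra).
  rewrite Rmult_assoc, (Rmult_comm (r ^ k) r). exact HM.
Qed.

Lemma rad_sh c y : good c -> Rabs y < 1 -> Rbar_lt (Rabs y) (CV_radius (sh c)).
Proof. intros Gc Hy. apply rad_good; auto. apply good_sh; auto. Qed.

Lemma sq_lt1 x : Rabs x < 1 -> Rabs (x ^ 2) < 1.
Proof.
  intros H. rewrite <- RPow_abs. pose proof (Rabs_pos x). simpl. nra.
Qed.

Definition F (c : nat -> R) (x : R) : R := x * PSeries (sh c) (x ^ 2).

Lemma F_ext c d x : (forall N, (1 <= N)%nat -> c N = d N) -> F c x = F d x.
Proof.
  intros E. unfold F. f_equal. apply PSeries_ext. intros n. unfold sh. apply E. lia.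
Qed.

Lemma F_scal a c x : F (fun N => a * c N) x = a * F c x.
Proof.
  unfold F. rewrite (PSeries_ext (sh (fun N => a * c N)) (PS_scal a (sh c))).
  rewrite PSeries_scal. ring. intros n. reflexivity.
Qed.

Lemma F_zero x : F (fun _ => 0) x = 0.
Proof.
  unfold F. rewrite (PSeries_ext _ (fun _ => 0)). rewrite PSeries_const_0. ring. reflexivity.
Qed.

Lemma ex_ps c x : good c -> Rabs x < 1 -> ex_pseries (sh c) (x ^ 2).
Proof. intros Gc Hx. apply CV_radius_inside. apply rad_sh; auto. apply sq_lt1; auto. Qed.

Lemma F_plus c d x : good c -> good d -> Rabs x < 1 ->
  F (fun N => c N + d N) x = F c x + F d x.
Proof.
  intros Gc Gd Hx. unfold F. rewrite <- Rmult_plus_distr_l. f_equal.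
  rewrite <- PSeries_plus by (apply ex_ps; auto). apply PSeries_ext. intros n. reflexivity.
Qed.

Lemma F_sum (f : nat -> nat -> R) a b x : (forall j, good (f j)) -> Rabs x < 1 ->
  F (fun N => sum_n_m (fun j => f j N) a b) x = sum_n_m (fun j => F (f j) x) a b.
Proof.
  intros Gf Hx. induction b as [|b IH].
  - destruct a as [|a].
    + rewrite sum_n_n. apply F_ext. intros N _. rewrite sum_n_n. reflexivity.
    + rewrite sum_n_m_zero by lia. transitivity (F (fun _ => 0) x); [|rewrite F_zero; reflexivity]. apply F_ext. intros N _.
      rewrite sum_n_m_zero by lia. reflexivity.
  - destruct (le_lt_dec a (S b)) as [Hab|Hab].
    + rewrite sum_n_Sm by exact Hab.
      rewrite (F_ext _ (fun N => sum_n_m (fun j => f j N) a b + f (S b) N)).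
      * rewrite F_plus; auto. rewrite IH. reflexivity. apply good_sum; auto.
      * intros N _. rewrite sum_n_Sm by exact Hab. reflexivity.
    + rewrite sum_n_m_zero by lia. transitivity (F (fun _ => 0) x); [|rewrite F_zero; reflexivity]. apply F_ext. intros N _.
      rewrite sum_n_m_zero by lia. reflexivity.
Qed.

Lemma deriv_combo a y : Rbar_lt (Rabs y) (CV_radius a) ->
  PSeries a y + 2 * y * PSeries (PS_derive a) y = PSeries (fun k => (2 * INR k + 1) * a k) y.
Proof.
  intros Hr.
  assert (Ha := PSeries_correct a y (CV_radius_inside a y Hr)).
  assert (Hr' : Rbar_lt (Rabs y) (CV_radius (PS_derive a))) by (rewrite CV_radius_derive; exact Hr).
  assert (Hd := PSeries_correct _ y (CV_radius_inside _ y Hr')).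
  assert (H1 := is_pseries_incr_1 _ _ _ Hd).
  assert (H2 := is_pseries_scal 2 _ _ _ (Rmult_comm _ _) H1).
  assert (H3 := is_pseries_plus _ _ _ _ _ Ha H2).
  assert (H4 : is_pseries (fun k => (2 * INR k + 1) * a k) y
     (plus (PSeries a y) (scal 2 (scal y (PSeries (PS_derive a) y))))).
  { eapply is_pseries_ext; [|exact H3].
    intros [|n]; unfold PS_plus, PS_scal, PS_incr_1, PS_derive; simpl; unfold plus, scal, zero; simpl; unfold mult; simpl.
    ring. ring. }
  apply is_pseries_unique in H4. rewrite H4. simpl. unfold plus, scal; simpl. unfold mult; simpl. ring.
Qed.

Lemma F_derive d w x : good d ->
  (forall N, (1 <= N)%nat -> w N = INR (2 * N - 1) * d N) -> Rabs x < 1 ->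
  is_derive (F d) x (PSeries (sh w) (x ^ 2)).
Proof.
  intros Gd Ew Hx.
  assert (Hr := rad_sh d (x ^ 2) Gd (sq_lt1 x Hx)).
  assert (Hp := is_derive_PSeries _ _ Hr).
  assert (Hsq : is_derive (fun t : R => t ^ 2) x (2 * x)).
  { auto_derive. auto. ring. }
  assert (Hc := is_derive_comp _ _ _ _ _ Hp Hsq).
  assert (Hm := is_derive_mult (fun t : R => t) _ x _ _ (is_derive_id x) Hc Rmult_comm).
  unfold F.
  replace (PSeries (sh w) (x ^ 2)) with
    (plus (mult one (PSeries (sh d) (x ^ 2))) (mult x (scal (2 * x) (PSeries (PS_derive (sh d)) (x ^ 2))))).
  { exact Hm. }
  transitivity (PSeries (sh d) (x ^ 2) + 2 * (x ^ 2) * PSeries (PS_derive (sh d)) (x ^ 2)).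
  { simpl. unfold plus, scal, one; simpl. unfold mult; simpl. ring. }
  rewrite deriv_combo by exact Hr. apply PSeries_ext. intros k. unfold sh.
  rewrite Ew by lia. rewrite INR_odd by lia. rewrite S_INR. ring.
Qed.

Lemma between_lt1 y x : Rabs y < 1 -> Rmin 0 y <= x <= Rmax 0 y -> Rabs x < 1.
Proof.
  intros Hy Hx. unfold Rmin, Rmax in Hx. destruct (Rle_dec 0 y);
  apply Rabs_def1; apply Rabs_def2 in Hy; lra.
Qed.

Lemma FTC_F d w g y : good d -> good w ->
  (forall N, (1 <= N)%nat -> w N = INR (2 * N - 1) * d N) ->
  (forall x, Rabs x < 1 -> g x = PSeries (sh w) (x ^ 2)) -> Rabs y < 1 ->
  RInt g 0 y = F d y.
Proof.
  intros Gd Gw Ew Eg Hy.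
  rewrite (RInt_ext g (fun x => PSeries (sh w) (x ^ 2))).
  2:{ intros x Hx. apply Eg. apply (between_lt1 y); auto. lra. }
  apply is_RInt_unique.
  replace (F d y) with (minus (F d y) (F d 0)).
  2:{ unfold F. simpl. unfold minus, plus, opp; simpl. ring. }
  apply (is_RInt_derive (F d) (fun x => PSeries (sh w) (x ^ 2)) 0 y).
  - intros x Hx. apply F_derive; auto. apply (between_lt1 y); auto.
  - intros x Hx. assert (Hx1 := between_lt1 y x Hy Hx).
    apply continuity_pt_filterlim.
    apply (continuity_pt_comp (fun t => t ^ 2) (PSeries (sh w)) x).
    + apply derivable_continuous_pt. apply derivable_pt_pow.
    + apply PSeries_continuity. apply rad_sh; auto. apply sq_lt1; auto.
Qed.

Lemma geomshift c y : good c -> Rabs y < 1 ->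
  (1 - y) * PSeries (sh (psum c)) y = y * PSeries (sh c) y.
Proof.
  intros Gc Hy.
  assert (Hp := PSeries_correct _ y (CV_radius_inside _ y (rad_sh (psum c) y (good_psum c Gc) Hy))).
  assert (Hq := PSeries_correct _ y (CV_radius_inside _ y (rad_sh c y Gc Hy))).
  assert (H1 := is_pseries_incr_1 _ _ _ Hp).
  assert (H2 := is_pseries_scal (-1) _ _ _ (Rmult_comm _ _) H1).
  assert (H3 := is_pseries_plus _ _ _ _ _ Hp H2).
  assert (H4 := is_pseries_incr_1 _ _ _ Hq).
  assert (H5 : is_pseries (PS_incr_1 (sh c)) y
      (plus (PSeries (sh (psum c)) y) (scal (-1) (scal y (PSeries (sh (psum c)) y))))).
  { eapply is_pseries_ext; [|exact H3].
    intros [|n]; unfold PS_plus, PS_scal, PS_incr_1, sh, psum; simpl; unfold plus, scal, zero; simpl; unfold mult; simpl.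
    - rewrite sum_n_m_zero by lia. unfold zero; simpl. ring.
    - rewrite Nat.sub_0_r. rewrite sum_n_Sm by lia. simpl. unfold plus; simpl. ring. }
  apply is_pseries_unique in H4. apply is_pseries_unique in H5. rewrite H4 in H5.
  revert H5. simpl. unfold plus, scal; simpl. unfold mult; simpl. intros H5. rewrite H5. ring.
Qed.

Definition om_tt' := om_tt.

Lemma LemmaA c y : good c -> Rabs y < 1 ->
  RInt (fun t => om_tt t * F c t) 0 y = F (fun N => oddinv N 1 * psum c N) y.
Proof.
  intros Gc Hy. apply (FTC_F _ (psum c)); auto.
  - apply good_mulb. intro N; apply (oddinv_le1 N 1). apply good_psum; auto.
  - apply good_psum; auto.
  - intros N HN. rewrite <- Rmult_assoc, oddinv1_mul by exact HN. ring.
  - intros x Hx. unfold om_tt, F.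
    assert (Hx2 : x ^ 2 < 1). { assert (H := sq_lt1 x Hx). rewrite Rabs_pos_eq in H; auto. apply pow2_ge_0. }
    assert (G := geomshift c (x ^ 2) Gc (sq_lt1 x Hx)).
    apply (Rmult_eq_reg_l (1 - x ^ 2)); [|lra].
    rewrite G. field. lra.
Qed.

Lemma LemmaB c y : good c -> c 1%nat = 0 -> Rabs y < 1 ->
  RInt (fun t => om_t t * F c t) 0 y = F (fun N => oddinv N 1 * c N) y.
Proof.
  intros Gc Hc1 Hy. apply (FTC_F _ c); auto.
  - apply good_mulb. intro N; apply (oddinv_le1 N 1). auto.
  - intros N HN. rewrite <- Rmult_assoc, oddinv1_mul by exact HN. ring.
  - intros x Hx. unfold om_t, F.
    destruct (Req_dec x 0) as [->|Hx0].
    + replace (0 ^ 2) with 0 by ring. rewrite PSeries_0. unfold sh. rewrite Hc1. ring.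
    + field. auto.
Qed.

Fixpoint iw (fs : list (R -> R)) (g : R -> R) (x : R) : R :=
  match fs with
  | nil => g x
  | f :: fs' => RInt (fun t => f t * iw fs' g t) 0 x
  end.

Lemma itint_aux_iw fs x : itint_aux fs x = iw fs (fun _ => 1) x.
Proof.
  revert x; induction fs as [|f fs IH]; intros x; simpl; auto.
  apply RInt_ext. intros t _. rewrite IH. reflexivity.
Qed.

Lemma iw_app l1 l2 g x : iw (l1 ++ l2) g x = iw l1 (iw l2 g) x.
Proof.
  revert x; induction l1 as [|f l1 IH]; intros x; simpl; auto.
  apply RInt_ext. intros t _. rewrite IH. reflexivity.
Qed.

Lemma iw_ext L g h x : (forall y, Rabs y < 1 -> g y = h y) -> Rabs x < 1 ->
  iw L g x = iw L h x.
Proof.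
  intros E. revert x; induction L as [|f L IH]; intros x Hx; simpl; auto.
  apply RInt_ext. intros t Ht. rewrite IH. reflexivity.
  apply (between_lt1 x); auto. lra.
Qed.

Lemma iter_om_t j c x : good c -> c 1%nat = 0 -> Rabs x < 1 ->
  iw (repeat om_t j) (F c) x = F (fun N => oddinv N 1 ^ j * c N) x.
Proof.
  revert x. induction j as [|j IH]; intros x Gc Hc Hx; simpl.
  - apply F_ext. intros; ring.
  - rewrite (RInt_ext _ (fun t => om_t t * F (fun N => oddinv N 1 ^ j * c N) t)).
    + rewrite LemmaB; auto.
      * apply F_ext. intros; ring.
      * apply good_mulb; auto. intro N. rewrite <- RPow_abs. apply pow_le1.
        split. apply Rabs_pos. apply oddinv_le1.
      * rewrite Hc. ring.
    + intros t Ht. rewrite IH; auto. apply (between_lt1 x); auto. lra.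
Qed.

Definition T (m : nat) (c : nat -> R) (N : nat) : R := oddinv N m * psum c N.

Lemma good_T m c : good c -> good (T m c).
Proof. intros Gc. apply good_mulb. intro N; apply oddinv_le1. apply good_psum; auto. Qed.

Lemma block_gen m c h x : (1 <= m)%nat -> good c ->
  (forall y, Rabs y < 1 -> h y = F (fun N => oddinv N 1 * psum c N) y) -> Rabs x < 1 ->
  iw (repeat om_t (m - 1)) h x = F (T m c) x.
Proof.
  intros Hm Gc Eh Hx. rewrite (iw_ext _ _ _ _ Eh Hx).
  rewrite iter_om_t; auto.
  - apply F_ext. intros N _. unfold T. rewrite <- Rmult_assoc. f_equal. apply oddinv_pow; auto.
  - apply good_mulb. intro N; apply oddinv_le1. apply good_psum; auto.
  - unfold psum. simpl. rewrite sum_n_m_zero by lia. unfold zero; simpl. ring.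
Qed.

Lemma block_rep m c x : (1 <= m)%nat -> good c -> Rabs x < 1 ->
  iw (rev (block m)) (F c) x = F (T m c) x.
Proof.
  intros Hm Gc Hx. unfold block. change (rev (om_tt :: repeat om_t (m - 1))) with (rev (repeat om_t (m - 1)) ++ [om_tt]). rewrite (rev_repeat (m-1) om_t), iw_app.
  apply block_gen; auto. intros y Hy. simpl. apply LemmaA; auto.
Qed.

Fixpoint Tall (ms : list nat) (c : nat -> R) : nat -> R :=
  match ms with
  | nil => c
  | m :: ms' => Tall ms' (T m c)
  end.

Lemma good_Tall ms c : good c -> good (Tall ms c).
Proof. revert c; induction ms; intros c Gc; simpl; auto. apply IHms. apply good_T; auto. Qed.

Lemma word_rep ms c x : List.Forall (fun k => (1 <= k)%nat) ms -> good c -> Rabs x < 1 ->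
  iw (rev (flat_map block ms)) (F c) x = F (Tall ms c) x.
Proof.
  revert c x. induction ms as [|m ms IH]; intros c x Hms Gc Hx.
  - simpl. reflexivity.
  - inversion Hms; subst. change (flat_map block (m :: ms)) with (block m ++ flat_map block ms). rewrite rev_app_distr, iw_app.
    rewrite (iw_ext _ _ (F (T m c))); auto.
    + simpl. apply IH; auto. apply good_T; auto.
    + intros y Hy. apply block_rep; auto.
Qed.

Definition delta (j N : nat) : R := if Nat.eqb N j then 1 else 0.

Definition tic (ks : list nat) (N : nat) : R :=
  match ks with
  | nil => 0
  | k :: ks' => oddinv N k * tstrict (N - 1) ks'
  end.

Fixpoint tsx (n : nat) (ks : list nat) (N : nat) : R :=
  match ks with
  | nil => delta n N
  | k :: ks' => sum_n_m (fun j => oddinv j k * tsx j ks' N) 1 n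
  end.

Definition RC (n : nat) (L : list nat) (N : nat) : R :=
  sum_n_m (fun j => (-1) ^ (j - 1) * tstar n (firstn (j - 1) L)
                      * tic (rev (skipn (j - 1) L)) N) 1 (length L)
  + (-1) ^ (length L) * tsx n L N.

Lemma psum_ext1 c d N : (forall i, (1 <= i)%nat -> c i = d i) -> psum c N = psum d N.
Proof. intros E. unfold psum. apply sum_n_m_ext_loc. intros k Hk. apply E. lia. Qed.

Lemma T_ext1 m c d N : (forall i, (1 <= i)%nat -> c i = d i) -> T m c N = T m d N.
Proof. intros E. unfold T. f_equal. apply psum_ext1; auto. Qed.

Lemma Tall_ext1 ms : forall c d, (forall i, (1 <= i)%nat -> c i = d i) ->
  forall N, (1 <= N)%nat -> Tall ms c N = Tall ms d N.
Proof.
  induction ms as [|m ms IH]; intros c d E N HN; simpl; auto.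
  apply IH; auto. intros i _. apply T_ext1; auto.
Qed.

Lemma Tall_app L m c : Tall (L ++ [m]) c = T m (Tall L c).
Proof. revert c; induction L; intros c; simpl; auto. Qed.

Lemma psum_scal a c N : psum (fun i => a * c i) N = a * psum c N.
Proof. unfold psum. apply (sum_n_m_mult_l (K := R_Ring)). Qed.

Lemma psum_plus c d N : psum (fun i => c i + d i) N = psum c N + psum d N.
Proof. unfold psum. apply (sum_n_m_plus (G := R_AbelianMonoid)). Qed.

Lemma psum_zero N : psum (fun _ => 0) N = 0.
Proof. unfold psum. apply (sum_n_m_const_zero (G := R_AbelianMonoid)). Qed.

Lemma psum_sum (f : nat -> nat -> R) a b N :
  psum (fun i => sum_n_m (fun j => f j i) a b) N = sum_n_m (fun j => psum (f j) N) a b.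
Proof.
  induction b as [|b IH].
  - destruct a as [|a].
    + rewrite sum_n_n. unfold psum. apply sum_n_m_ext. intros i. rewrite sum_n_n. reflexivity.
    + rewrite sum_n_m_zero by lia. transitivity (psum (fun _ => 0) N); [|rewrite psum_zero; reflexivity]. unfold psum. apply sum_n_m_ext.
      intros i. rewrite sum_n_m_zero by lia. reflexivity.
  - destruct (le_lt_dec a (S b)) as [Hab|Hab].
    + rewrite sum_n_Sm by exact Hab.
      rewrite <- IH. rewrite <- psum_plus. unfold psum. apply sum_n_m_ext. intros i.
      rewrite sum_n_Sm by exact Hab. reflexivity.
    + rewrite sum_n_m_zero by lia. transitivity (psum (fun _ => 0) N); [|rewrite psum_zero; reflexivity]. unfold psum. apply sum_n_m_ext.
      intros i. rewrite sum_n_m_zero by lia. reflexivity.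
Qed.

Lemma Tall_scal ms : forall c a N, (1 <= N)%nat ->
  Tall ms (fun i => a * c i) N = a * Tall ms c N.
Proof.
  induction ms as [|m ms IH]; intros c a N HN; simpl; auto.
  rewrite <- IH by auto. apply Tall_ext1; auto. intros i _. unfold T. rewrite psum_scal. ring.
Qed.

Lemma T_tic m R N : R <> [] -> T m (tic R) N = tic (m :: R) N.
Proof. intros H. destruct R as [|k ks]. congruence. reflexivity. Qed.

Lemma good_delta j : good (delta j).
Proof. apply good_bounded. intros N. unfold delta. destruct (Nat.eqb N j); rewrite ?Rabs_R1, ?Rabs_R0; lra. Qed.

Lemma good_tic R : good (tic R).
Proof.
  induction R as [|k R IH].
  - apply good_zero.
  - destruct R as [|k' R].
    + apply good_bounded. intros N. simpl. rewrite Rmult_1_r. apply oddinv_le1.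
    + eapply good_ext1; [|apply (good_T k _ IH)]. intros N _. apply T_tic. congruence.
Qed.

Lemma good_tsx L : forall n, good (tsx n L).
Proof.
  induction L as [|k L IH]; intros n; simpl.
  - apply good_delta.
  - apply (good_sum (fun j N => oddinv j k * tsx j L N)). intros j. apply good_scal. apply IH.
Qed.

Lemma sum_delta j M : (1 <= j)%nat ->
  sum_n_m (delta j) 1 M = if Nat.leb j M then 1 else 0.
Proof.
  intros Hj. induction M as [|M IH].
  - rewrite sum_n_m_zero by lia. destruct (Nat.leb_spec j 0); [lia|reflexivity].
  - rewrite sum_n_Sm by lia. rewrite IH. unfold delta. change (plus ?a ?b) with (Rplus a b).
    destruct (Nat.leb_spec j M), (Nat.eqb_spec (S M) j), (Nat.leb_spec j (S M)); try lia; simpl; ring.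
Qed.

Lemma sum_odd_delta m j N :
  sum_n_m (fun i => oddinv i m * delta i N) 1 j =
  if (Nat.leb 1 N && Nat.leb N j)%bool then oddinv N m else 0.
Proof.
  induction j as [|j IH].
  - rewrite sum_n_m_zero by lia. destruct (Nat.leb_spec 1 N), (Nat.leb_spec N 0); simpl; try lia; reflexivity.
  - rewrite sum_n_Sm by lia. rewrite IH. unfold delta. change (plus ?a ?b) with (Rplus a b).
    destruct (Nat.leb_spec 1 N), (Nat.leb_spec N j), (Nat.eqb_spec N (S j)), (Nat.leb_spec N (S j));
      simpl; try lia; try ring. subst. ring.
Qed.

Lemma sum_lin (u v w : nat -> R) t a b :
  sum_n_m (fun j => u j * (v j * t - w j)) a b
  = sum_n_m (fun j => u j * v j) a b * t - sum_n_m (fun j => u j * w j) a b.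
Proof.
  induction b as [|b IH].
  - destruct a as [|a].
    + rewrite !sum_n_n. simpl; ring.
    + rewrite !sum_n_m_zero by lia. unfold zero; simpl. simpl; ring.
  - destruct (le_lt_dec a (S b)) as [Hab|Hab].
    + rewrite !sum_n_Sm by exact Hab. rewrite IH. unfold plus; simpl. simpl; ring.
    + rewrite !sum_n_m_zero by lia. unfold zero; simpl. simpl; ring.
Qed.

Lemma T_tsx ks : forall n m N, (1 <= n)%nat -> (1 <= N)%nat ->
  T m (tsx n ks) N = tstar n ks * tic [m] N - tsx n (ks ++ [m]) N.
Proof.
  induction ks as [|k ks IH]; intros n m N Hn HN.
  - simpl. unfold T, psum. rewrite sum_delta by exact Hn.
    rewrite sum_odd_delta.
    destruct (Nat.leb_spec n (N - 1)), (Nat.leb_spec 1 N), (Nat.leb_spec N n); simpl; try lia; ring.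
  - transitivity (sum_n_m (fun j => oddinv j k * T m (tsx j ks) N) 1 n).
    { simpl. unfold T at 1. rewrite psum_sum.
      rewrite <- (sum_n_m_mult_l (K := R_Ring)). apply sum_n_m_ext. intros j.
      rewrite psum_scal. unfold T. unfold mult; simpl. ring. }
    rewrite (sum_n_m_ext_loc _ (fun j => oddinv j k * (tstar j ks * tic [m] N - tsx j (ks ++ [m]) N))).
    2:{ intros j Hj. rewrite IH by lia. reflexivity. }
    rewrite sum_lin. simpl. reflexivity.
Qed.

Lemma T_RC m n L N :
  T m (RC n L) N =
  sum_n_m (fun j => (-1) ^ (j - 1) * tstar n (firstn (j - 1) L)
                      * T m (tic (rev (skipn (j - 1) L))) N) 1 (length L)
  + (-1) ^ (length L) * T m (tsx n L) N.
Proof.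
  unfold RC. unfold T at 1. rewrite psum_plus.
  rewrite (psum_sum (fun j i => (-1) ^ (j - 1) * tstar n (firstn (j - 1) L) * tic (rev (skipn (j - 1) L)) i)).
  rewrite psum_scal. rewrite Rmult_plus_distr_l. f_equal.
  - rewrite <- (sum_n_m_mult_l (K := R_Ring)). apply sum_n_m_ext. intros j.
    rewrite psum_scal. unfold T. unfold mult; simpl. ring.
  - unfold T. ring.
Qed.

Lemma MC n : (1 <= n)%nat -> forall L N, (1 <= N)%nat -> Tall L (delta n) N = RC n L N.
Proof.
  intros Hn L. induction L as [|m L IH] using rev_ind; intros N HN.
  - unfold RC. simpl. rewrite sum_n_m_zero by lia. unfold zero; simpl. ring.
  - rewrite Tall_app. rewrite (T_ext1 _ _ (RC n L)) by (intros; apply IH; auto).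
    rewrite T_RC. rewrite T_tsx by auto.
    unfold RC. rewrite length_app. simpl length. rewrite Nat.add_1_r.
    rewrite sum_n_Sm by lia.
    replace (S (length L) - 1)%nat with (length L) by lia.
    rewrite firstn_app, Nat.sub_diag, firstn_all. simpl firstn. rewrite app_nil_r.
    rewrite skipn_app, Nat.sub_diag, skipn_all. simpl skipn. simpl rev.
    rewrite (sum_n_m_ext_loc
      (fun j => (-1) ^ (j - 1) * tstar n (firstn (j - 1) (L ++ [m])) * tic (rev (skipn (j - 1) (L ++ [m]))) N)
      (fun j => (-1) ^ (j - 1) * tstar n (firstn (j - 1) L) * T m (tic (rev (skipn (j - 1) L))) N)).
    + change (plus ?a ?b) with (Rplus a b). simpl pow. ring.
    + intros j Hj. rewrite firstn_app. replace (j - 1 - length L)%nat with 0%nat by lia.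
      simpl firstn. rewrite app_nil_r. rewrite skipn_app.
      replace (j - 1 - length L)%nat with 0%nat by lia. simpl skipn.
      rewrite rev_app_distr. simpl rev. rewrite T_tic. reflexivity.
      intros E. apply (f_equal (@length nat)) in E. rewrite length_rev, length_skipn in E. simpl in E. lia.
Qed.

Lemma F_plus' c d e x : good c -> good d -> Rabs x < 1 -> (forall N, e N = c N + d N) ->
  F e x = F c x + F d x.
Proof. intros Gc Gd Hx E. rewrite <- F_plus by auto. apply F_ext. intros; auto. Qed.

Lemma F_scal' a c e x : (forall N, e N = a * c N) -> F e x = a * F c x.
Proof. intros E. rewrite <- F_scal. apply F_ext. intros; auto. Qed.

Lemma F_sum' (f : nat -> nat -> R) e a b x : (forall j, good (f j)) -> Rabs x < 1 ->
  (forall N, e N = sum_n_m (fun j => f j N) a b) ->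
  F e x = sum_n_m (fun j => F (f j) x) a b.
Proof. intros Gf Hx E. rewrite <- F_sum by auto. apply F_ext. intros; auto. Qed.

Lemma F_delta j x : (1 <= j)%nat -> Rabs x < 1 -> F (delta j) x = x ^ (2 * j - 1).
Proof.
  intros Hj Hx. unfold F.
  set (e0 := fun k : nat => match k with O => 1 | S _ => 0 end).
  assert (Ge0 : good e0).
  { apply good_bounded. intros [|k]; simpl; rewrite ?Rabs_R1, ?Rabs_R0; lra. }
  assert (He : PSeries e0 (x ^ 2) = 1).
  { rewrite PSeries_decr_1.
    - rewrite (PSeries_ext _ (fun _ => 0)) by (intros; reflexivity). rewrite PSeries_const_0. simpl. ring.
    - apply CV_radius_inside. apply rad_good; auto. apply sq_lt1; auto. }
  destruct j as [|j]; [lia|].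
  rewrite (PSeries_ext _ (PS_incr_n e0 j)).
  - rewrite PSeries_incr_n, He. replace (2 * S j - 1)%nat with (S (2 * j)) by lia.
    rewrite <- pow_mult. simpl. ring.
  - assert (Hinc : forall j k, PS_incr_n e0 j k = if Nat.eqb k j then 1 else 0).
    { clear. induction j as [|j IH]; intros [|k]; simpl; auto. }
    intros k. unfold sh, delta. rewrite Hinc. reflexivity.
Qed.

Lemma ti_F k ks x : Rabs x < 1 -> ti (k :: ks) x = F (tic (k :: ks)) x.
Proof.
  intros Hx. unfold ti, F.
  assert (Hpt : forall i : nat, x ^ (2 * S i - 1) * oddinv (S i) k * tstrict (S i - 1) ks
                  = x * (sh (tic (k :: ks)) i * (x ^ 2) ^ i)).
  { intros i. replace (2 * S i - 1)%nat with (S (2 * i)) by lia.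
    change (x ^ S (2 * i)) with (x * x ^ (2 * i)). rewrite pow_mult. unfold sh, tic. ring. }
  assert (Hex : ex_series (fun i => x * (sh (tic (k :: ks)) i * (x ^ 2) ^ i))).
  { apply (ex_series_scal_l x (fun i => sh (tic (k :: ks)) i * (x ^ 2) ^ i)).
    assert (H := ex_ps (tic (k :: ks)) x (good_tic _) Hx).
    eapply ex_series_ext; [|exact H]. intros i. simpl. rewrite pow_n_pow. unfold scal; simpl. unfold mult; simpl. ring. }
  rewrite Series_incr_1.
  - rewrite (Series_ext _ (fun i => x * (sh (tic (k :: ks)) i * (x ^ 2) ^ i))).
    + rewrite Series_scal_l. unfold PSeries. ring.
    + intros i. apply Hpt.
  - apply ex_series_incr_1. eapply ex_series_ext; [|exact Hex]. intros i. symmetry. apply Hpt.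
Qed.

Lemma tstarx_F L : forall n x, L <> [] -> Rabs x < 1 -> tstarx n L x = F (tsx n L) x.
Proof.
  induction L as [|k L IH]; intros n x HL Hx. congruence.
  simpl tstarx.
  rewrite (F_sum' (fun j N => oddinv j k * tsx j L N) _ 1 n x).
  - apply sum_n_m_ext_loc. intros j Hj. rewrite (F_scal' (oddinv j k) (tsx j L)) by (intros; reflexivity).
    f_equal. destruct L as [|k' L].
    + simpl. rewrite F_delta by (auto || lia). reflexivity.
    + apply IH; auto. congruence.
  - intros j. apply good_scal. apply good_tsx.
  - auto.
  - intros N. reflexivity.
Qed.

Lemma FRC n L x : L <> [] -> Rabs x < 1 ->
  F (RC n L) x = sum_n_m (fun j => (-1) ^ (j - 1) * tstar n (firstn (j - 1) L)
                        * ti (rev (skipn (j - 1) L)) x) 1 (length L)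
    + (-1) ^ (length L) * tstarx n L x.
Proof.
  intros HL Hx. unfold RC.
  set (A := fun j => (-1) ^ (j - 1) * tstar n (firstn (j - 1) L)).
  rewrite (F_plus' (fun N => sum_n_m (fun j => (fun j N => A j * tic (rev (skipn (j - 1) L)) N) j N) 1 (length L))
                   (fun N => (-1) ^ (length L) * tsx n L N)).
  - f_equal.
    + rewrite (F_sum' (fun j N => A j * tic (rev (skipn (j - 1) L)) N) _ 1 (length L) x).
      * apply sum_n_m_ext_loc. intros j Hj.
        rewrite (F_scal' (A j) (tic (rev (skipn (j - 1) L)))) by (intros; reflexivity).
        unfold A. f_equal.
        destruct (rev (skipn (j - 1) L)) as [|k R] eqn:E.
        -- exfalso. apply (f_equal (@length nat)) in E. rewrite length_rev, length_skipn in E. simpl in E. lia.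
        -- symmetry. apply ti_F; auto.
      * intros j. apply good_scal. apply good_tic.
      * auto.
      * intros N. reflexivity.
    + rewrite (F_scal' _ (tsx n L)) by (intros; reflexivity). f_equal. symmetry. apply tstarx_F; auto.
  - apply (good_sum (fun j N => A j * tic (rev (skipn (j - 1) L)) N)). intros j. apply good_scal, good_tic.
  - apply good_scal, good_tsx.
  - auto.
  - intros N. reflexivity.
Qed.

Lemma RInt_pow k y : RInt (fun t => t ^ k * 1) 0 y = y ^ (S k) / INR (S k).
Proof.
  apply is_RInt_unique.
  replace (y ^ S k / INR (S k)) with
    (minus ((fun t => t ^ S k / INR (S k)) y) ((fun t => t ^ S k / INR (S k)) 0)).
  2:{ cbv beta. change (minus ?a ?b) with (a - b). rewrite pow_i by lia.
        unfold Rdiv. rewrite Rmult_0_l. apply Rminus_0_r. }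
  apply (is_RInt_derive (fun t => t ^ S k / INR (S k)) (fun t => t ^ k * 1) 0 y).
  - intros t _. auto_derive. auto. change (match k with 0%nat => 1 | S _ => INR k + 1 end) with (INR (S k)). field. apply not_0_INR. lia.
  - intros t _. apply continuity_pt_filterlim. apply derivable_continuous_pt.
    apply derivable_pt_mult. apply derivable_pt_pow. apply derivable_pt_const.
Qed.

Theorem mainTheorem7 (m1 : nat) (ms : list nat) (n : nat) (x : R)
  (hm : List.Forall (fun k => (1 <= k)%nat) (m1 :: ms))
  (hn : (1 <= n)%nat)
  (hx : Rabs x < 1) :
  let m := m1 :: ms in
  let p := length m in
  INR (2 * n) *
    itint ((fun t => t ^ (2 * n - 1)) :: om_1 :: repeat om_t (m1 - 1)
             ++ flat_map block ms) x
  = INR (2 * n - 1) *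
    itint ((fun t => t ^ (2 * n - 2)) :: flat_map block m) x
  /\
  INR (2 * n - 1) *
    itint ((fun t => t ^ (2 * n - 2)) :: flat_map block m) x
  = sum_n_m (fun j => (-1) ^ (j - 1) * tstar n (firstn (j - 1) m)
                        * ti (rev (skipn (j - 1) m)) x) 1 p
    + (-1) ^ p * tstarx n m x.
Proof.
  cbv zeta.
  assert (Hms : List.Forall (fun k => (1 <= k)%nat) ms) by (inversion hm; auto).
  assert (Hm1 : (1 <= m1)%nat) by (inversion hm; auto).
  assert (Hn1 : INR (2 * n - 1) <> 0) by (apply not_0_INR; lia).
  assert (Hn2 : INR (2 * n) <> 0) by (apply not_0_INR; lia).
  assert (P2 : INR (2 * n - 1) * itint ((fun t => t ^ (2 * n - 2)) :: flat_map block (m1 :: ms)) x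
               = F (Tall (m1 :: ms) (delta n)) x).
  { unfold itint. cbn [rev]. rewrite itint_aux_iw, iw_app.
    rewrite (iw_ext _ _ (F (fun N => / INR (2 * n - 1) * delta n N))); auto.
    - rewrite word_rep; auto.
      + rewrite (F_ext _ (fun N => / INR (2 * n - 1) * Tall (m1 :: ms) (delta n) N)).
        * rewrite F_scal. field. auto.
        * intros N HN. apply Tall_scal; auto.
      + apply good_scal, good_delta.
    - intros y Hy. cbn [iw]. rewrite RInt_pow.
      rewrite (F_scal' _ (delta n)) by (intros; reflexivity). rewrite F_delta by auto.
      replace (S (2 * n - 2)) with (2 * n - 1)%nat by lia. unfold Rdiv. ring. }
  split.
  - rewrite P2. unfold itint. cbn [rev]. rewrite rev_app_distr, rev_repeat, <- !app_assoc.
    rewrite itint_aux_iw, iw_app.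
    set (c1 := fun N => / INR (2 * n) * delta n N).
    assert (Gc1 : good c1) by (apply good_scal, good_delta).
    rewrite (iw_ext _ _ (F (T m1 c1))); auto.
    + rewrite word_rep; auto.
      * change (Tall ms (T m1 c1)) with (Tall (m1 :: ms) c1).
        rewrite (F_ext _ (fun N => / INR (2 * n) * Tall (m1 :: ms) (delta n) N)).
        -- rewrite F_scal. field. auto.
        -- intros N HN. apply Tall_scal; auto.
      * apply good_T; auto.
    + intros y Hy. rewrite iw_app. apply block_gen; auto.
      intros z Hz. rewrite <- LemmaA by auto. cbn [iw].
      apply RInt_ext. intros t Ht.
      assert (Htl : Rabs t < 1) by (apply (between_lt1 z); auto; lra).
      rewrite RInt_pow. unfold c1. rewrite (F_scal' _ (delta n)) by (intros; reflexivity).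
      rewrite F_delta by auto. replace (S (2 * n - 1)) with (2 * n)%nat by lia.
      replace (2 * n)%nat with (S (2 * n - 1)) at 1 by lia.
      unfold om_1, om_tt. change (t ^ S (2 * n - 1)) with (t * t ^ (2 * n - 1)).
      assert (Ht2 : 1 - t ^ 2 <> 0).
      { assert (H := sq_lt1 t Htl). rewrite Rabs_pos_eq in H by apply pow2_ge_0. lra. }
      match goal with |- ?a = ?b => change (@eq R a b) end. field. auto.
  - rewrite P2. rewrite (F_ext _ (RC n (m1 :: ms))).
    + apply FRC; auto. congruence.
    + intros N HN. apply MC; auto.
Qed.
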